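(* Let $T$ be a complete theory. If $\langle\varphi(x,y),\langle a_\eta\rangle_{\eta\in{}^{\omega>}2}\rangle$ is an antichain tree, then $\varphi(x,y)$ witnesses SOP$_1$.
   Context: Work in a monster model of $T$; ${}^{\omega>}2$ is the binary tree with initial-segment order $\trianglelefteq$. A subset $X\subseteq{}^{\omega>}2$ is an antichain if its elements are pairwise $\trianglelefteq$-incomparable. $\langle\varphi(x,y),\langle a_\eta\rangle_{\eta\in{}^{\omega>}2}\rangle$ is an antichain tree if for every $X\subseteq{}^{\omega>}2$, $\{\varphi(x,a_\eta):\eta\in X\}$ is consistent if and only if $X$ is an antichain. $\varphi$ witnesses SOP$_1$ if there is $\langle b_\eta\rangle_{\eta\in{}^{\omega>}2}$ such that for every $\eta\in{}^\omega2$, $\{\varphi(x,b_{\eta\lceil n}):n<\omega\}$ is consistent, and for all $\eta,\nu\in{}^{\omega>}2$, $\{\varphi(x,b_{\eta^\frown\langle1\rangle}),\varphi(x,b_{\eta^\frown\langle0\rangle^\frown\nu})\}$ is inconsistent. *)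

(* Defs.v *)
From mathcomp Require Import all_boot.
Set Implicit Arguments.
Unset Strict Implicit.
Unset Printing Implicit Defensive.

Definition tree := seq bool.

Definition tle (eta nu : tree) : Prop := prefix eta nu.

Definition antichain (X : tree -> Prop) : Prop :=
  forall eta nu, X eta -> X nu -> eta <> nu -> ~ tle eta nu.

(* Consistency (with the elementary diagram of the model M) of the set of
   formulas {phi(x, a_eta) : eta in X}: by compactness, this is finite
   satisfiability in M. *)
Definition consistent (M : Type) (n m : nat)
  (phi : n.-tuple M -> m.-tuple M -> Prop) (a : tree -> m.-tuple M)
  (X : tree -> Prop) : Prop :=
  forall s : seq tree, (forall eta, eta \in s -> X eta) ->
    exists x : n.-tuple M, forall eta, eta \in s -> phi x (a eta).

Definition antichain_tree (M : Type) (n m : nat)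
  (phi : n.-tuple M -> m.-tuple M -> Prop) (a : tree -> m.-tuple M) : Prop :=
  forall X : tree -> Prop, consistent phi a X <-> antichain X.

Definition restr (eta : nat -> bool) (k : nat) : tree := mkseq eta k.

Definition witnesses_SOP1 (M : Type) (n m : nat)
  (phi : n.-tuple M -> m.-tuple M -> Prop) : Prop :=
  exists b : tree -> m.-tuple M,
    (forall eta : nat -> bool,
        consistent phi b (fun s => exists k, s = restr eta k)) /\
    (forall eta nu : tree,
        ~ consistent phi b
            (fun s => s = rcons eta true \/ s = eta ++ false :: nu)).

(* Main.v *)
Require Import Defs.
From mathcomp Require Import all_boot.

Definition code (c : bool) : seq bool := if c then [:: false] else [:: false; true].
Definition hh (s : tree) : tree := flatten (map code s).
Definition ff (s : tree) : tree := rcons (hh s) true.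

Lemma hh_cat s t : hh (s ++ t) = hh s ++ hh t.
Proof. by rewrite /hh map_cat flatten_cat. Qed.

Lemma restr_split (e : nat -> bool) k j : k < j ->
  exists r, restr e j = restr e k ++ e k :: r.
Proof.
elim: j => [//|j IH]; rewrite ltnS leq_eqVlt => /orP[/eqP->|/IH[r Hr]].
  by exists [::]; rewrite /restr mkseqS cats1.
exists (rcons r (e j)); rewrite /restr mkseqS -/(restr e j) Hr.
by rewrite rcons_cat rcons_cons.
Qed.

Lemma size_ff_restr e k : size (ff (restr e k)) = (size (hh (restr e k))).+1.
Proof. by rewrite /ff size_rcons. Qed.

Lemma size_hh_mono e k j : k <= j -> size (hh (restr e k)) <= size (hh (restr e j)).
Proof.
rewrite leq_eqVlt => /orP[/eqP->//|/(restr_split e _ _)[r ->]].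
by rewrite hh_cat size_cat leq_addr.
Qed.

Theorem proposition4p4 (M : Type) (n m : nat)
  (phi : n.-tuple M -> m.-tuple M -> Prop) (a : tree -> m.-tuple M) :
  antichain_tree phi a -> witnesses_SOP1 phi.
Proof.
move=> AT; exists (fun s => a (ff s)); split.
- move=> e s Hs.
  have C : consistent phi a (fun t => exists k, t = ff (restr e k)).
    apply/AT => _ _ [k ->] [j ->] Hne Hle.
    have Hkj : k != j by apply/eqP => E; apply: Hne; rewrite E.
    case: (ltngtP k j) => [lt|lt|E]; last by rewrite E eqxx in Hkj.
    + case: (restr_split e _ _ lt) => r Er.
      move: Hle; rewrite /tle /ff Er hh_cat -!cats1 -catA.
      rewrite prefix_catr // eqxx /=.
      by case: (e k).
    + move/size_prefix: Hle; rewrite !size_ff_restr ltnS.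
      have := size_hh_mono e _ _ (ltnW lt).
      case: (restr_split e _ _ lt) => r Er.
      rewrite Er hh_cat size_cat => _.
      have : 0 < size (hh (e j :: r)) by case: (e j).
      move=> Hp H; have := leq_trans H (leqnn _).
      rewrite -{2}(addn0 (size (hh (restr e j)))) leq_add2l leqn0.
      by move/eqP => H0; rewrite H0 in Hp.
  case: (C (map ff s)).
    move=> t /mapP[u /Hs [k ->] ->]; by exists k.
  move=> x Hx; exists x => u Hu; apply: Hx; exact: map_f.
- move=> eta nu Hc.
  case: (Hc [:: rcons eta true; eta ++ false :: nu]).
    by move=> t; rewrite !inE => /orP[/eqP->|/eqP->]; [left|right].
  move=> x Hx.
  have C : consistent phi a (fun t => t = ff (rcons eta true) \/ t = ff (eta ++ false :: nu)).
    move=> s Hs; exists x => t /Hs [->|->]; apply: Hx; by rewrite !inE eqxx ?orbT.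
  have A := (proj1 (AT _) C).
  apply: (A (ff (rcons eta true)) (ff (eta ++ false :: nu))); [by left|by right| |].
  - move/(congr1 size); rewrite /ff !size_rcons hh_cat -cats1 hh_cat !size_cat /=.
    by move=> /succn_inj /addnI; rewrite addn0 !addSn.
  - rewrite /tle /ff -!cats1 !hh_cat -!catA prefix_catr // eqxx /=.
    exact: prefix0s.
Qed.
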